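(* Let $\alpha$ be a set with an involution $\tau$. For $a,b\in\alpha$ let $w_{a,b}$ denote the nanoword $(\{A,B\},ABAB)$ with $|A|=a$, $|B|=b$. If $\tau(a)\neq b$, then $w_{a,b}$ is not contractible. Two nanowords $w_{a,b}$ and $w_{a',b'}$ with $\tau(a)\neq b$ and $\tau(a')\neq b'$ are homotopic if and only if $a=a'$ and $b=b'$.
   Context: Fix a set $\alpha$ with an involution $\tau:\alpha\to\alpha$. An $\alpha$-alphabet is a set $\mathcal A$ with a map $\mathcal A\to\alpha$, $A\mapsto|A|$. A nanoword over $\alpha$ is a pair $(\mathcal A,w)$ where $\mathcal A$ is a finite $\alpha$-alphabet and $w$ is a word in the letters of $\mathcal A$ in which every letter of $\mathcal A$ occurs exactly twice; its length is the length of $w$. Two nanowords $(\mathcal A_1,w_1),(\mathcal A_2,w_2)$ are isomorphic if there is a bijection $f:\mathcal A_1\to\mathcal A_2$ with $|f(A)|=|A|$ for all $A$ and $w_2$ is obtained from $w_1$ by applying $f$ letterwise. Homotopy moves (here $x,y,z,t$ are words in the remaining letters, and smaller alphabets carry the restricted projection): (1) $(\mathcal A,xAAy)\mapsto(\mathcal A\setminus\{A\},xy)$; (2) $(\mathcal A,xAByBAz)\mapsto(\mathcal A\setminus\{A,B\},xyz)$ whenever $|B|=\tau(|A|)$; (3) $(\mathcal A,xAByACzBCt)\mapsto(\mathcal A,xBAyCAzCBt)$ whenever $A,B,C$ are distinct and $|A|=|B|=|C|$. Homotopy is the equivalence relation on nanowords generated by isomorphisms, these moves and their inverses. A nanoword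 is contractible if it is homotopic to the empty nanoword. *)

(* Defs.v *)
From mathcomp Require Import all_boot.
Set Implicit Arguments. Unset Strict Implicit. Unset Printing Implicit Defensive.

(* Letters are drawn from nat (every finite alphabet is
   isomorphic to a finite subset of nat, and homotopy is invariant under
   isomorphism).  The alphabet of a nanoword is the set of letters occurring in
   its word; [nw_proj] is the projection |.| (its values outside the alphabet
   are irrelevant: isomorphisms only look at letters of the word). *)
Record nanoword (alpha : Type) := Nanoword {
  nw_word : seq nat;
  nw_proj : nat -> alpha }.

Definition wf_nanoword alpha (u : nanoword alpha) : Prop :=
  forall x, x \in nw_word u -> count_mem x (nw_word u) = 2.

Definition nw_iso alpha (u v : nanoword alpha) : Prop :=
  exists f : nat -> nat,
    {in nw_word u &, injective f} /\
    map f (nw_word u) = nw_word v /\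
    (forall x, x \in nw_word u -> nw_proj v (f x) = nw_proj u x).

Inductive nw_move alpha (tau : alpha -> alpha) : nanoword alpha -> nanoword alpha -> Prop :=
| move1 (p : nat -> alpha) (A : nat) (x y : seq nat) :
    nw_move tau (Nanoword (x ++ [:: A; A] ++ y) p) (Nanoword (x ++ y) p)
| move2 (p : nat -> alpha) (A B : nat) (x y z : seq nat) :
    p B = tau (p A) ->
    nw_move tau (Nanoword (x ++ [:: A; B] ++ y ++ [:: B; A] ++ z) p)
                (Nanoword (x ++ y ++ z) p)
| move3 (p : nat -> alpha) (A B C : nat) (x y z t : seq nat) :
    A <> B -> A <> C -> B <> C -> p A = p B -> p B = p C ->
    nw_move tau
      (Nanoword (x ++ [:: A; B] ++ y ++ [:: A; C] ++ z ++ [:: B; C] ++ t) p)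
      (Nanoword (x ++ [:: B; A] ++ y ++ [:: C; A] ++ z ++ [:: C; B] ++ t) p).

Inductive homotopic alpha (tau : alpha -> alpha) : nanoword alpha -> nanoword alpha -> Prop :=
| hom_iso u v : wf_nanoword u -> wf_nanoword v -> nw_iso u v -> homotopic tau u v
| hom_move u v : wf_nanoword u -> wf_nanoword v -> nw_move tau u v -> homotopic tau u v
| hom_sym u v : homotopic tau u v -> homotopic tau v u
| hom_trans u v w : homotopic tau u v -> homotopic tau v w -> homotopic tau u w.

Definition contractible alpha (tau : alpha -> alpha) (u : nanoword alpha) : Prop :=
  homotopic tau u (Nanoword [::] (nw_proj u)).

Definition w_ab alpha (a b : alpha) : nanoword alpha :=
  Nanoword [:: 0; 1; 0; 1] (fun n => if n == 0 then a else b).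

(* Main.v *)
Require Import Defs.
From mathcomp Require Import all_boot all_algebra zify.
From Stdlib Require Import ClassicalEpsilon.
Set Implicit Arguments. Unset Strict Implicit. Unset Printing Implicit Defensive.
Import GRing.Theory.
Local Open Scope ring_scope.

Fixpoint aft (X : nat) (w : seq nat) : seq nat :=
  if w is y :: w' then (if y == X then w' else aft X w') else [::].
Fixpoint bef (X : nat) (w : seq nat) : seq nat :=
  if w is y :: w' then (if y == X then [::] else y :: bef X w') else [::].
Definition seg X w := bef X (aft X w).
Definition suf X w := aft X (aft X w).

Lemma aft_cat X u v : aft X (u ++ v) = if X \in u then aft X u ++ v else aft X v.
Proof.
elim: u => [|y u IH] //=; rewrite in_cons IH (eq_sym X).
by case: (y == X).
Qed.

Lemma bef_cat X u v : bef X (u ++ v) = if X \in u then bef X u else u ++ bef X v.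
Proof.
elim: u => [|y u IH] //=; rewrite in_cons IH (eq_sym X).
by case: (y == X) => //=; case: (X \in u).
Qed.

Lemma mem_aft X w : {subset aft X w <= w}.
Proof.
elim: w => [|y w IH] //= z; case: (y == X) => H; rewrite in_cons ?H ?IH ?orbT //.
Qed.

Lemma mem_bef X w : {subset bef X w <= w}.
Proof.
elim: w => [|y w IH] //= z; case: (y == X) => //; rewrite !in_cons.
by case/orP => [->|/IH ->]; rewrite ?orbT.
Qed.

Lemma mem_seg X w : {subset seg X w <= w}.
Proof. by move=> z /mem_bef /mem_aft. Qed.
Lemma mem_suf X w : {subset suf X w <= w}.
Proof. by move=> z /mem_aft /mem_aft. Qed.

Lemma aft_filter (p : pred nat) X w : p X -> aft X (filter p w) = filter p (aft X w).
Proof.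
move=> pX; elim: w => [|y w IH] //=.
case py: (p y) => /=; first by case: (y == X).
by case: eqP => [E|_ //]; rewrite E pX in py.
Qed.

Lemma bef_filter (p : pred nat) X w : p X -> bef X (filter p w) = filter p (bef X w).
Proof.
move=> pX; elim: w => [|y w IH] //=.
case py: (p y) => /=; first by case: (y == X) => //=; rewrite py IH.
by case: eqP => [E|_ //=]; [rewrite E pX in py | rewrite py].
Qed.

Lemma seg_filter (p : pred nat) X w : p X -> seg X (filter p w) = filter p (seg X w).
Proof. by move=> pX; rewrite /seg aft_filter // bef_filter. Qed.
Lemma suf_filter (p : pred nat) X w : p X -> suf X (filter p w) = filter p (suf X w).
Proof. by move=> pX; rewrite /suf !aft_filter. Qed.

Section Template.
Variable R : seq nat -> seq nat -> Prop.
Hypothesis Rrefl : forall s, R s s.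
Hypothesis Rcat : forall s s' r r', R s s' -> R r r' -> R (s ++ r) (s' ++ r').

Lemma template X x y z t m1 m2 m3 m1' m2' m3' :
  R m1 m1' -> R m2 m2' -> R m3 m3' ->
  X \notin m1 -> X \notin m2 -> X \notin m3 ->
  X \notin m1' -> X \notin m2' -> X \notin m3' ->
  R (seg X (x ++ m1 ++ y ++ m2 ++ z ++ m3 ++ t)) (seg X (x ++ m1' ++ y ++ m2' ++ z ++ m3' ++ t)) /\
  R (suf X (x ++ m1 ++ y ++ m2 ++ z ++ m3 ++ t)) (suf X (x ++ m1' ++ y ++ m2' ++ z ++ m3' ++ t)).
Proof.
move=> r1 r2 r3 /negbTE n1 /negbTE n2 /negbTE n3 /negbTE n1' /negbTE n2' /negbTE n3'.
rewrite /seg /suf.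
have C := fun a b c d (h1 : R a b) (h2 : R c d) => Rcat h1 h2.
rewrite !(aft_cat, bef_cat, n1, n2, n3, n1', n2', n3').
repeat (case: ifP => _; rewrite ?(aft_cat, bef_cat, n1, n2, n3, n1', n2', n3')).
all: split; repeat (first [apply: Rrefl | apply: Rcat | eassumption]).
Qed.
End Template.

Lemma count_split (a q : pred nat) s :
  count a s = (count (predI a q) s + count (predI a (predC q)) s)%N.
Proof. elim: s => //= y s ->; case: (a y); case: (q y) => /=; lia. Qed.

Lemma cnt1 (a : pred nat) A s :
  count (fun z => a z && ~~ (z != A)) s = (a A * count_mem A s)%N.
Proof.
elim: s => [|y s IH] /=; first by rewrite muln0.
rewrite IH negbK mulnDr; case: (y =P A) => [->|_]; by rewrite ?eqxx ?andbT ?andbF ?muln0 ?muln1.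
Qed.

Lemma cnt0_2 (A : nat) x y : (count_mem A x + (1 + (1 + count_mem A y)))%N = 2%N -> A \notin x /\ A \notin y.
Proof. by move=> H; split; apply/count_memPn; lia. Qed.

Definition Rpar (A : nat) := fun s s' : seq nat => odd (count_mem A s) = odd (count_mem A s').
Lemma Rpar_refl A s : Rpar A s s. Proof. by []. Qed.
Lemma Rpar_cat A s s' r r' : Rpar A s s' -> Rpar A r r' -> Rpar A (s ++ r) (s' ++ r').
Proof. by rewrite /Rpar !count_cat !oddD => -> ->. Qed.

Lemma notin_count0 (A : nat) s : A \notin s -> count_mem A s = 0%N.
Proof. by move/count_memPn. Qed.

Lemma nn (X : nat) : X \notin [::]. Proof. by []. Qed.

Lemma even_seg1 A X x y : A \notin x -> A \notin y -> X != A ->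
  ~~ odd (count_mem A (seg X (x ++ [:: A; A] ++ y))).
Proof.
move=> Ax Ay XA.
have r1 : Rpar A [:: A; A] [::] by rewrite /Rpar /= eqxx.
have nA : X \notin [:: A; A] by rewrite !inE (negbTE XA).
have [H _] := @template (Rpar A) (@Rpar_refl A) (@Rpar_cat A) X x y [::] [::] [:: A; A] [::] [::]
   [::] [::] [::] r1 erefl erefl nA (nn X) (nn X) (nn X) (nn X) (nn X).
move: H; rewrite /Rpar !cats0 => ->.
rewrite notin_count0 //; apply/negP => /mem_seg.
by rewrite !mem_cat (negbTE Ax) (negbTE Ay).
Qed.

Section Inv.
Variables (alpha : Type) (tau : alpha -> alpha).
Variables (G : zmodType) (F : alpha -> bool -> G) (T : alpha -> bool) (flag : bool).
Hypothesis HF0 : forall x, F x false = 0.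
Hypothesis HFt : forall x, F x true + F (tau x) true = 0.
Hypothesis HT : forall x, T (tau x) = T x.
Hypothesis Hfl : flag -> forall x, T x -> F x true = 0.

Definition K (p : nat -> alpha) w X := fun y => T (p y) && (~~ flag || (y \in suf X w)).
Definition term p w X := F (p X) (odd (count (K p w X) (seg X w))).
Definition ninv (u : nanoword alpha) :=
  \sum_(X <- undup (nw_word u)) term (nw_proj u) (nw_word u) X.

Lemma HFt' x b : F x b + F (tau x) b = 0.
Proof. by case: b; rewrite ?HFt ?HF0 ?addr0. Qed.

Lemma outside_filter p w (q : pred nat) X : q X ->
  ~~ odd (count (predI (K p w X) (predC q)) (seg X w)) ->
  term p w X = term p (filter q w) X.
Proof.
move=> qX Hev; rewrite /term seg_filter // count_filter (count_split _ q) oddD.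
rewrite (negbTE Hev) addbF; congr (F _ (odd _)); apply: eq_count => z /=.
rewrite /K suf_filter // mem_filter; by case: (q z); rewrite ?andbF ?andbT.
Qed.

Lemma wf_count0 (x : seq nat) A n : (count_mem A x + n = n)%N -> A \notin x.
Proof. by move=> H; apply/count_memPn; lia. Qed.

Lemma inv_move1 p A x y : wf_nanoword (Nanoword (x ++ [:: A; A] ++ y) p) ->
  ninv (Nanoword (x ++ [:: A; A] ++ y) p) = ninv (Nanoword (x ++ y) p).
Proof.
move=> wf; have := wf A; rewrite /= mem_cat inE eqxx orbT => /(_ isT).
rewrite count_cat /= eqxx => Hc. move: Hc; rewrite /= ?eqxx /= => Hc.
have [Ax Ay] := cnt0_2 Hc.
have Hf : filter (fun z => z != A) (x ++ [:: A; A] ++ y) = x ++ y.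
  rewrite filter_cat /= eqxx /=; congr (_ ++ _); apply/all_filterP.
  - by apply/allP => z zx; apply: contraNneq Ax => <-.
  - by apply/allP => z zy; apply: contraNneq Ay => <-.
rewrite /ninv /=.
have Pu : perm_eq (undup (x ++ [:: A; A] ++ y)) (A :: undup (x ++ y)).
  apply: uniq_perm; rewrite ?undup_uniq //=.
    by rewrite undup_uniq mem_undup mem_cat negb_or Ax Ay.
  by move=> z; rewrite !inE !mem_undup !mem_cat !inE; case: (z == A); rewrite ?orbT ?orbF.
rewrite (perm_big _ Pu) big_cons /=.
have -> : term p (x ++ [:: A; A] ++ y) A = 0.
  by rewrite /term /seg aft_cat (negbTE Ax) /= eqxx /= eqxx /= HF0.
rewrite add0r big_seq [in RHS]big_seq; apply: eq_bigr => X; rewrite mem_undup => HX.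
have XA : X != A by apply: contraTneq HX => ->; rewrite mem_cat negb_or Ax Ay.
rewrite -Hf; apply: outside_filter => //.
rewrite (eq_count (a2 := fun z => K p (x ++ [:: A; A] ++ y) X z && ~~ (z != A))) // cnt1 oddM.
by apply/nandP; right; exact: even_seg1.
Qed.
End Inv.

Lemma ar4 (a b c d e f g h : nat) : (a + d = b + c -> e + h = f + g ->
  (a + e) + (d + h) = (b + f) + (c + g))%N.
Proof. lia. Qed.

Definition Rab (A B : nat) := fun s s' : seq nat =>
  (count_mem A s + count_mem B s' = count_mem B s + count_mem A s')%N.
Lemma Rab_refl A B s : Rab A B s s. Proof. by rewrite /Rab addnC. Qed.
Lemma Rab_cat A B s s' r r' : Rab A B s s' -> Rab A B r r' -> Rab A B (s ++ r) (s' ++ r').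
Proof. rewrite /Rab !count_cat; exact: ar4. Qed.

Lemma ar2 (a b c : nat) (e : bool) :
  (a + (1 + (e + (b + (e + (1 + c))))))%N = 2%N -> [/\ a = 0, b = 0, c = 0 & e = false]%N.
Proof. by case: e => /= H; split; lia. Qed.
Lemma ar2' (a b c : nat) (e : bool) :
  (a + (e + (1 + (b + (1 + (e + c))))))%N = 2%N -> [/\ a = 0, b = 0, c = 0 & e = false]%N.
Proof. by case: e => /= H; split; lia. Qed.

Lemma mem_count_pos (A : nat) s : (A \in s) = (0 < count_mem A s)%N.
Proof. by rewrite -has_count has_pred1. Qed.

Lemma seg2 A B X x y z : A != B -> A \notin x -> A \notin y -> A \notin z ->
  B \notin x -> B \notin y -> B \notin z -> X \notin [:: A; B] ->
  count_mem A (seg X (x ++ [:: A; B] ++ y ++ [:: B; A] ++ z)) =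
  count_mem B (seg X (x ++ [:: A; B] ++ y ++ [:: B; A] ++ z)) /\
  (A \in suf X (x ++ [:: A; B] ++ y ++ [:: B; A] ++ z)) =
  (B \in suf X (x ++ [:: A; B] ++ y ++ [:: B; A] ++ z)).
Proof.
move=> AB Ax Ay Az Bx By Bz XAB.
have r1 : Rab A B [:: A; B] [::] by rewrite /Rab /= !eqxx (eq_sym B A) (negbTE AB).
have r2 : Rab A B [:: B; A] [::] by rewrite /Rab /= !eqxx (eq_sym B A) (negbTE AB).
have XBA : X \notin [:: B; A] by move: XAB; rewrite !inE orbC.
have [H1 H2] := @template (Rab A B) (@Rab_refl A B) (@Rab_cat A B) X x y z [::] [:: A; B] [:: B; A] [::]
   [::] [::] [::] r1 r2 (Rab_refl _ _ _) XAB XBA (nn X) (nn X) (nn X) (nn X).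
move: H1 H2; rewrite /Rab !cats0 !cat0s.
have nA : A \notin x ++ y ++ z by rewrite !mem_cat !negb_or Ax Ay Az.
have nB : B \notin x ++ y ++ z by rewrite !mem_cat !negb_or Bx By Bz.
rewrite !(notin_count0 (A := A) (s := seg X (x ++ y ++ z))); last by apply/negP => /mem_seg H; rewrite H in nA.
rewrite !(notin_count0 (A := B) (s := seg X (x ++ y ++ z))); last by apply/negP => /mem_seg H; rewrite H in nB.
rewrite !(notin_count0 (A := A) (s := suf X (x ++ y ++ z))); last by apply/negP => /mem_suf H; rewrite H in nA.
rewrite !(notin_count0 (A := B) (s := suf X (x ++ y ++ z))); last by apply/negP => /mem_suf H; rewrite H in nB.
rewrite !addn0 => -> H2; split => //.
by rewrite !mem_count_pos H2.
Qed.

Lemma cnt2 (a : pred nat) A B s : A != B ->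
  count (fun z => a z && ~~ (z \notin [:: A; B])) s = (a A * count_mem A s + a B * count_mem B s)%N.
Proof.
move=> AB; elim: s => [|y s IH] /=; first by rewrite !muln0.
rewrite IH negbK !inE !mulnDr.
case: (y =P A) => [->|_]; first by rewrite ?eqxx (negbTE AB) /=; case: (a A); case: (a B) => /=; lia.
case: (y =P B) => [->|_]; first by rewrite ?eqxx /=; case: (a A); case: (a B) => /=; lia.
by rewrite /= andbF !muln0.
Qed.

Section Inv2.
Variables (alpha : Type) (tau : alpha -> alpha).
Variables (G : zmodType) (F : alpha -> bool -> G) (T : alpha -> bool) (flag : bool).
Hypothesis HF0 : forall x, F x false = 0.
Hypothesis HFt : forall x, F x true + F (tau x) true = 0.
Hypothesis HT : forall x, T (tau x) = T x.
Hypothesis Hfl : flag -> forall x, T x -> F x true = 0.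

Notation ninv := (ninv F T flag).
Notation term := (term F T flag).
Notation K := (K T flag).

Lemma inv_move2 p A B x y z : p B = tau (p A) ->
  wf_nanoword (Nanoword (x ++ [:: A; B] ++ y ++ [:: B; A] ++ z) p) ->
  ninv (Nanoword (x ++ [:: A; B] ++ y ++ [:: B; A] ++ z) p) = ninv (Nanoword (x ++ y ++ z) p).
Proof.
move=> pB wf.
have := wf A; rewrite /= !mem_cat !inE eqxx orbT => /(_ isT).
rewrite !count_cat /= !count_cat /= !eqxx => /ar2 [cAx cAy cAz eBA].
have := wf B; rewrite /= !mem_cat !inE eqxx !orbT => /(_ isT).
rewrite !count_cat /= !count_cat /= !eqxx => /ar2' [cBx cBy cBz _].
have AB : A != B by rewrite eq_sym eBA.
have Ax : A \notin x by apply/count_memPn.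
have Ay : A \notin y by apply/count_memPn.
have Az : A \notin z by apply/count_memPn.
have Bx : B \notin x by apply/count_memPn.
have By : B \notin y by apply/count_memPn.
have Bz : B \notin z by apply/count_memPn.
set W := x ++ _.
have Hf : filter (fun w => w \notin [:: A; B]) W = x ++ y ++ z.
  rewrite /W !filter_cat /= !inE !eqxx /= ?orbT /= !filter_cat /= !inE !eqxx ?orbT /=.
  have fid s : A \notin s -> B \notin s -> filter (fun w => w \notin [:: A; B]) s = s.
    move=> As Bs; apply/all_filterP/allP => w ws; rewrite !inE negb_or.
    by apply/andP; split; apply/eqP => E; subst w; [rewrite ws in As | rewrite ws in Bs].
  by rewrite !fid.
rewrite /ninv /=.
have Pu : perm_eq (undup W) (A :: B :: undup (x ++ y ++ z)).
  apply: uniq_perm; rewrite ?undup_uniq //=.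
    rewrite undup_uniq !mem_undup !inE !mem_cat !negb_or !mem_undup !mem_cat !negb_or Ax Ay Az Bx By Bz.
    by rewrite AB.
  move=> w; rewrite /W !inE !mem_undup !mem_cat !inE.
  rewrite !mem_cat !inE; by case: (w == A); case: (w == B); rewrite /= ?orbT ?orbF.
rewrite (perm_big _ Pu) !big_cons /= addrA.
have -> : term p W A + term p W B = 0.
  rewrite /term /W /seg aft_cat (negbTE Ax) /= eqxx /= (eq_sym B A) (negbTE AB).
  rewrite bef_cat (negbTE Ay) /= (eq_sym B A) (negbTE AB) /= eqxx.
  rewrite aft_cat (negbTE Bx) /= (negbTE AB) /= eqxx bef_cat (negbTE By) /= eqxx cats0.
  rewrite count_cat /= addn0 addnCA oddD addnn odd_double addbF.
  have sA : suf A W = z.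
    by rewrite /suf /W aft_cat (negbTE Ax) /= eqxx /= (eq_sym B A) (negbTE AB) aft_cat (negbTE Ay) /= (eq_sym B A) (negbTE AB) /= eqxx.
  have sB : suf B W = A :: z.
    by rewrite /suf /W aft_cat (negbTE Bx) /= (negbTE AB) eqxx aft_cat (negbTE By) /= eqxx.
  rewrite (@eq_in_count _ (K p W A) (K p W B)); last first.
    move=> w wy; rewrite /K sA sB inE.
    have -> : (w == A) = false by apply/eqP => E; subst w; rewrite wy in Ay.
    by [].
  by rewrite pB (HFt' HF0 HFt).
rewrite add0r big_seq [in RHS]big_seq; apply: eq_bigr => X; rewrite mem_undup => HX.
have XAB : X \notin [:: A; B].
  rewrite !inE negb_or; apply/andP; split; apply/eqP => E; subst X; move: HX;
  by rewrite !mem_cat ?(negbTE Ax) ?(negbTE Ay) ?(negbTE Az) ?(negbTE Bx) ?(negbTE By) ?(negbTE Bz).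
rewrite -Hf; apply: outside_filter => //.
rewrite (eq_count (a2 := fun w => K p W X w && ~~ (w \notin [:: A; B]))) // cnt2 //.
have [c1 c2] := seg2 AB Ax Ay Az Bx By Bz XAB.
have -> : K p W X B = K p W X A by rewrite /K -c2 pB HT.
by rewrite -/W -c1 addnn odd_double.
Qed.
End Inv2.

Lemma ar3 (a b c : nat) : (a + (1 + (b + (1 + c))))%N = 2%N -> [/\ a = 0, b = 0 & c = 0]%N.
Proof. by move=> H; split; lia. Qed.

Lemma two_occ (A : nat) x u v : count_mem A (x ++ A :: u ++ A :: v) = 2%N ->
  [/\ A \notin x, A \notin u & A \notin v].
Proof.
rewrite count_cat /= count_cat /= eqxx => /ar3 [h1 h2 h3].
by split; apply/count_memPn.
Qed.

Lemma perm_refl' (s : seq nat) : perm_eq s s. Proof. exact: perm_refl. Qed.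
Lemma perm_cat' (s s' r r' : seq nat) : perm_eq s s' -> perm_eq r r' -> perm_eq (s ++ r) (s' ++ r').
Proof. exact: perm_cat. Qed.

Lemma neq_of_notin (a w : nat) (s : seq nat) : w \in s -> a \notin s -> (w == a) = false.
Proof. by move=> ws; apply: contraNF => /eqP <-. Qed.

Ltac nin H := let h := fresh "h" in apply/negP; intro h; move/negP: H; apply; rewrite ?(inE, mem_cat, h, orbT).

Section Inv3.
Variables (alpha : Type) (tau : alpha -> alpha).
Variables (G : zmodType) (F : alpha -> bool -> G) (T : alpha -> bool) (flag : bool).
Hypothesis HF0 : forall x, F x false = 0.
Hypothesis HFt : forall x, F x true + F (tau x) true = 0.
Hypothesis HT : forall x, T (tau x) = T x.
Hypothesis Hfl : flag -> forall x, T x -> F x true = 0.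

Notation ninv := (ninv F T flag).
Notation term := (term F T flag).
Notation K := (K T flag).

Lemma inv_move3 p A B C x y z t : A <> B -> A <> C -> B <> C -> p A = p B -> p B = p C ->
  wf_nanoword (Nanoword (x ++ [:: A; B] ++ y ++ [:: A; C] ++ z ++ [:: B; C] ++ t) p) ->
  ninv (Nanoword (x ++ [:: A; B] ++ y ++ [:: A; C] ++ z ++ [:: B; C] ++ t) p) =
  ninv (Nanoword (x ++ [:: B; A] ++ y ++ [:: C; A] ++ z ++ [:: C; B] ++ t) p).
Proof.
move=> /eqP AB /eqP AC /eqP BC pAB pBC wf.
set W := x ++ _; set W' := x ++ _.
have [Ax Ay' Av] : [/\ A \notin x, A \notin B :: y & A \notin C :: z ++ B :: C :: t].
  apply: two_occ; apply: wf; rewrite /W !mem_cat inE eqxx orbT //.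
have Ay : A \notin y by nin Ay'.
have Az : A \notin z by nin Av.
have At : A \notin t by nin Av.
have [Bx' By' Bv] : [/\ B \notin x ++ [:: A], B \notin y ++ A :: C :: z & B \notin C :: t].
  apply: two_occ; rewrite (_ : _ ++ _ = W); last by rewrite /W -!catA.
  by apply: wf; rewrite /W !mem_cat !inE eqxx !orbT.
have Bx : B \notin x by nin Bx'.
have By : B \notin y by nin By'.
have Bz : B \notin z by nin By'.
have Bt : B \notin t by nin Bv.
have [Cx' Cz' Ct] : [/\ C \notin x ++ A :: B :: y ++ [:: A], C \notin z ++ [:: B] & C \notin t].
  apply: two_occ; rewrite (_ : _ ++ _ = W); last by rewrite /W -!catA /= -!catA.
  by apply: wf; rewrite /W !mem_cat !inE eqxx !orbT.
have Cx : C \notin x by nin Cx'.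
have Cy : C \notin y by nin Cx'.
have Cz : C \notin z by nin Cz'.
have BA : B != A by rewrite eq_sym.
have CA : C != A by rewrite eq_sym.
have CB : C != B by rewrite eq_sym.
have E := (negbTE Ax, negbTE Ay, negbTE Az, negbTE At, negbTE Bx, negbTE By, negbTE Bz, negbTE Bt,
           negbTE Cx, negbTE Cy, negbTE Cz, negbTE Ct, negbTE AB, negbTE AC, negbTE BC,
           negbTE BA, negbTE CA, negbTE CB).
have WW : W =i W'.
  move=> w; rewrite /W /W' !(mem_cat, inE).
  by case: (w == A); case: (w == B); case: (w == C); rewrite /= ?orbT ?orbF.
rewrite /ninv /= [in RHS](perm_big _ (perm_undup (s1 := W') (s2 := W) (fun w => esym (WW w)))).
apply: eq_big_seq => X; rewrite mem_undup => XW.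
have [->|XA] := eqVneq X A.
  rewrite /term /K /seg /suf /W /W' /=.
  do 6 rewrite ?(aft_cat, bef_cat, E, eqxx) /=.
  rewrite cats0 count_cat /= addn0.
  have -> : B \in C :: z ++ [:: B, C & t] by rewrite !(inE, mem_cat) eqxx !orbT.
  have -> : C \in z ++ [:: C, B & t] by rewrite !(inE, mem_cat) eqxx !orbT.
  rewrite orbT !andbT -pBC addnC; congr (F _ (odd (_ + _))).
  apply: eq_in_count => w wy /=; congr (_ && (_ || _)).
  by rewrite !(inE, mem_cat) (neq_of_notin wy By) (neq_of_notin wy Cy).

have [->|XB] := eqVneq X B.
  rewrite /term /K /seg /suf /W /W' /=.
  do 6 rewrite ?(aft_cat, bef_cat, E, eqxx) /=.
  rewrite !cats0 !count_cat /= !count_cat /= ?addn0 ?inE ?eqxx (negbTE AC) (negbTE At) (negbTE Ct) /= ?orbT ?orbF ?andbT.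
  rewrite -pBC -pAB.
  rewrite (@eq_in_count _ _ (fun w => T (p w) && (~~ flag || (w \in t))) y); last first.
    by move=> w wy /=; rewrite inE (neq_of_notin wy Cy).
  rewrite (@eq_in_count _ _ (fun w => T (p w) && (~~ flag || (w \in t))) z); last first.
    by move=> w wz /=; rewrite inE (neq_of_notin wz Cz).
  case: flag Hfl => [Hf|_].
    case TA: (T (p A)).
      have h b : F (p A) b = 0 by case: b; [exact: Hf | exact: HF0].
      by rewrite !h.
    by rewrite /= !oddD /= addbF.
  rewrite /= !oddD /= !andbT.
  by case: (T (p A)); case: (odd (count _ y)); case: (odd (count _ z)).

have [->|XC] := eqVneq X C.
  rewrite /term /K /seg /suf /W /W' /=.
  do 6 rewrite ?(aft_cat, bef_cat, E, eqxx) /=.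
  rewrite !cats0 !count_cat /= ?addn0 ?inE ?eqxx ?(negbTE AB) ?(negbTE At) ?(negbTE Bt) ?orbF.
  have -> : count (fun w => T (p w) && (~~ flag || (w \in B :: t))) z =
            count (fun w => T (p w) && (~~ flag || (w \in t))) z.
    by apply: eq_in_count => w wz /=; rewrite inE (neq_of_notin wz Bz).
  by rewrite pAB addnC.

have XABC : [/\ X \notin [:: A; B], X \notin [:: A; C] & X \notin [:: B; C]].
  by rewrite !inE (negbTE XA) (negbTE XB) (negbTE XC).
have XABC' : [/\ X \notin [:: B; A], X \notin [:: C; A] & X \notin [:: C; B]].
  by rewrite !inE (negbTE XA) (negbTE XB) (negbTE XC).
case: XABC XABC' => n1 n2 n3 [n1' n2' n3'].
have p1 : perm_eq [:: A; B] [:: B; A] by rewrite perm_sym; apply/permP => q /=; rewrite addnCA.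
have p2 : perm_eq [:: A; C] [:: C; A] by rewrite perm_sym; apply/permP => q /=; rewrite addnCA.
have p3 : perm_eq [:: B; C] [:: C; B] by rewrite perm_sym; apply/permP => q /=; rewrite addnCA.
have [Hs Hu] := @template _ perm_refl' perm_cat' X x y z t _ _ _ _ _ _ p1 p2 p3 n1 n2 n3 n1' n2' n3'.
rewrite /term -/W -/W' (permP Hs); congr (F _ (odd _)).
by apply: eq_count => w; rewrite /K (perm_mem Hu).
Qed.
End Inv3.

Lemma aft_map (f : nat -> nat) X w : (forall y, y \in w -> (f y == f X) = (y == X)) ->
  aft (f X) (map f w) = map f (aft X w).
Proof.
elim: w => [|y w IH] //= H; rewrite H ?inE ?eqxx //.
by case: (y == X) => //; apply: IH => z zw; apply: H; rewrite inE zw orbT.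
Qed.

Lemma bef_map (f : nat -> nat) X w : (forall y, y \in w -> (f y == f X) = (y == X)) ->
  bef (f X) (map f w) = map f (bef X w).
Proof.
elim: w => [|y w IH] //= H; rewrite H ?inE ?eqxx //.
by case: (y == X) => //=; rewrite IH // => z zw; apply: H; rewrite inE zw orbT.
Qed.

Section Iso.
Variables (alpha : Type) (G : zmodType) (F : alpha -> bool -> G) (T : alpha -> bool) (flag : bool).
Notation ninv := (ninv F T flag).
Notation term := (term F T flag).

Lemma inv_iso u v : nw_iso u v -> ninv u = ninv v.
Proof.
case: u v => w pu [w' pv] [f [finj [Hw Hp]]]; rewrite /= in finj Hw Hp; subst w'; rewrite /ninv /=.
have Pu : perm_eq (undup (map f w)) (map f (undup w)).
  apply: uniq_perm; rewrite ?undup_uniq //.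
    rewrite (map_inj_in_uniq (s := undup w)) ?undup_uniq //.
    by move=> a b; rewrite !mem_undup; apply: finj.
  by move=> z; rewrite mem_undup; apply/mapP/mapP => [[a aw ->]|[a aw ->]]; exists a;
     rewrite ?mem_undup in aw *.
rewrite (perm_big _ Pu) big_map big_seq [in RHS]big_seq; apply: eq_bigr => X.
rewrite mem_undup => Xw.
have HX (s : seq nat) : {subset s <= w} -> forall y, y \in s -> (f y == f X) = (y == X).
  move=> sw y ys; apply/eqP/eqP => [E|-> //]; exact: finj (sw _ ys) Xw E.
have mf (s : seq nat) y : {subset s <= w} -> y \in w -> (f y \in map f s) = (y \in s).
  move=> sw yw; apply/mapP/idP => [[a aw E]|ys]; last by exists y.
  by rewrite -(finj _ _ (sw _ aw) yw (esym E)).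
have sa : {subset aft X w <= w} by exact: mem_aft.
rewrite /term /seg /suf (aft_map (HX w (fun z h => h))) (bef_map (HX _ sa)).
rewrite Hp // count_map; congr (F _ (odd _)).
apply: eq_in_count => y ys /=.
have yw : y \in w by apply: mem_aft (mem_bef ys).
rewrite /K /suf (aft_map (HX w (fun z h => h))) (aft_map (HX _ sa)) Hp // mf //.
by move=> z /mem_aft /mem_aft.
Qed.
End Iso.

Section Hom.
Variables (alpha : Type) (tau : alpha -> alpha).
Variables (G : zmodType) (F : alpha -> bool -> G) (T : alpha -> bool) (flag : bool).
Hypothesis HF0 : forall x, F x false = 0.
Hypothesis HFt : forall x, F x true + F (tau x) true = 0.
Hypothesis HT : forall x, T (tau x) = T x.
Hypothesis Hfl : flag -> forall x, T x -> F x true = 0.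

Lemma ninv_hom u v : homotopic tau u v -> ninv F T flag u = ninv F T flag v.
Proof.
elim => [u' v' _ _ Hi | u' v' wu wv Hm | u' v' _ IH | u' v' w' _ IH1 _ IH2].
- exact: inv_iso.
- case: Hm wu wv => [p A x y | p A B x y z pB | p A B C x y z t AB AC BC pAB pBC] wu wv.
  + exact: inv_move1.
  + exact: inv_move2.
  + exact: inv_move3.
- by rewrite IH.
- by rewrite IH1 IH2.
Qed.
End Hom.

Lemma w_inv (alpha : Type) (G : zmodType) (F : alpha -> bool -> G) (T : alpha -> bool) (flag : bool) a b :
  ninv F T flag (w_ab a b) = F a (T b) + F b (T a && ~~ flag).
Proof.
rewrite /ninv /= !big_cons big_nil /term /K /seg /suf /= addr0.
by rewrite ?inE ?eqxx ?orbT ?orbF ?addn0 ?oddb andbT.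
Qed.

Lemma empty_inv (alpha : Type) (G : zmodType) (F : alpha -> bool -> G) (T : alpha -> bool) (flag : bool) p :
  ninv F T flag (Nanoword [::] p) = 0.
Proof. by rewrite /ninv /= big_nil. Qed.


Section Main.
Variables (alpha : Type) (tau : alpha -> alpha).
Hypothesis Htau : forall x, tau (tau x) = x.

Definition eqcl (x y : alpha) : bool := if excluded_middle_informative (x = y) then true else false.
Lemma eqclP x y : reflect (x = y) (eqcl x y).
Proof. by rewrite /eqcl; case: excluded_middle_informative => h; constructor. Qed.
Lemma eqcl_refl x : eqcl x x. Proof. exact/eqclP. Qed.
Lemma eqcl_tau x y : eqcl (tau x) y = eqcl x (tau y).
Proof. by apply/eqclP/eqclP => [<-|->]; rewrite Htau. Qed.

Definition Rc (a x : alpha) := eqcl x a || eqcl x (tau a).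
Lemma Rc_tau a x : Rc a (tau x) = Rc a x.
Proof. by rewrite /Rc !eqcl_tau Htau orbC. Qed.
Lemma Rc_self a : Rc a a. Proof. by rewrite /Rc eqcl_refl. Qed.
Lemma Rc_trans a b x : Rc a x -> Rc b x -> Rc a b.
Proof.
move=> ha; rewrite /Rc; case/orP => /eqclP E; first by rewrite -E.
by rewrite E Rc_tau in ha.
Qed.
Lemma Rc_sym a b : Rc a b -> Rc b a.
Proof. by move=> h; apply: Rc_trans (Rc_self b) h. Qed.

Definition FJ (a : alpha) (x : alpha) (b : bool) : 'Z_2 := if b && Rc a x then 1 else 0.

Lemma J_hom a b u v : ~~ Rc a b -> homotopic tau u v ->
  ninv (FJ a) (Rc b) true u = ninv (FJ a) (Rc b) true v.
Proof.
move=> nab; apply: ninv_hom.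
- by [].
- by move=> x; rewrite /FJ /= Rc_tau; case: (Rc a x) => //; apply/eqP.
- exact: Rc_tau.
- move=> _ x hb; rewrite /FJ /=; case ha: (Rc a x) => //.
  by move: nab; rewrite (Rc_trans ha hb).
Qed.

Definition sig (a x : alpha) : int := if eqcl x a then 1 else if eqcl x (tau a) then -1 else 0.
Definition FQ a x (b : bool) : int := if b then sig a x else 0.

Lemma Q_hom a c u v : tau a <> a -> homotopic tau u v ->
  ninv (FQ a) (Rc c) false u = ninv (FQ a) (Rc c) false v.
Proof.
move=> na; apply: ninv_hom.
- by [].
- move=> x; rewrite /FQ /sig !eqcl_tau Htau.
  case: (eqclP x a) => [e1|xa]; case: (eqclP x (tau a)) => [e2|xa'].
  - by case: na; rewrite -e2 e1.
  - by rewrite addrN.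
  - by rewrite addNr.
  - by rewrite addr0.
- exact: Rc_tau.
- by [].
Qed.

Lemma sig_self a : sig a a = 1. Proof. by rewrite /sig eqcl_refl. Qed.
Lemma sig_tau a : tau a <> a -> sig a (tau a) = -1.
Proof. by move=> na; rewrite /sig eqcl_refl; case: eqclP. Qed.


Lemma noncontr a b : tau a <> b -> ~ contractible tau (w_ab a b).
Proof.
move=> nab Hc; rewrite /contractible in Hc.
case: (boolP (Rc a b)) => hab.
- have eb : b = a.
    by move: hab; rewrite /Rc; case/orP => /eqclP // E; case: nab; rewrite E.
  subst b.
  have := Q_hom a nab Hc; rewrite w_inv empty_inv /FQ Rc_self sig_self /=.
  by move/eqP.
- have := J_hom hab Hc; rewrite w_inv empty_inv /FJ !Rc_self /=.
  by rewrite andbF addr0 => /eqP.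
Qed.

Lemma gen a b a' b' : ~~ Rc a b -> homotopic tau (w_ab a b) (w_ab a' b') -> a = a' /\ b = b'.
Proof.
move=> hab H.
have hba : Rc b a = false by apply/negbTE; apply: contra hab; exact: Rc_sym.
have := J_hom hab H; rewrite !w_inv /FJ !Rc_self /= !andbF !addr0.
case: ifP => [/andP [hb' ha'] _ | _ /eqP //].
have ea : a' = a.
  case/orP: ha' => /eqclP // E.
  case: (eqclP (tau a) a) => [e|na]; first by rewrite E e.
  have := Q_hom b na H; rewrite !w_inv /FQ /= Rc_self hba hb' E sig_self sig_tau // Rc_tau hba.
  by move/eqP.
subst a'; split => //.
case/orP: hb' => /eqclP // E.
case: (eqclP (tau b) b) => [e|nb]; first by rewrite E e.
have := Q_hom a nb H; rewrite !w_inv /FQ /= Rc_self (negbTE hab) E sig_self sig_tau // Rc_tau (negbTE hab).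
by move/eqP.
Qed.

Lemma diag a a' : tau a <> a -> homotopic tau (w_ab a a) (w_ab a' a') -> a = a'.
Proof.
move=> na H.
have := Q_hom a na H; rewrite !w_inv /FQ /= Rc_self sig_self.
case: (eqclP a' a) => [//|n1].
case: (eqclP a' (tau a)) => [e|n2].
  by rewrite e Rc_tau Rc_self sig_tau // => /eqP.
have -> : Rc a a' = false by rewrite /Rc; case: eqclP => // _; case: eqclP.
by move/eqP.
Qed.

Lemma diag_eq a b : Rc a b -> tau a <> b -> b = a.
Proof. by rewrite /Rc; case/orP => /eqclP // E nab; case: nab; rewrite E. Qed.

End Main.

Theorem theorem8p3 (alpha : Type) (tau : alpha -> alpha)
  (Htau : forall x, tau (tau x) = x) :
  (forall a b : alpha, tau a <> b -> ~ contractible tau (w_ab a b)) /\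
  (forall a b a' b' : alpha, tau a <> b -> tau a' <> b' ->
     (homotopic tau (w_ab a b) (w_ab a' b') <-> a = a' /\ b = b')).
Proof.
split; first exact: noncontr Htau.
move=> a b a' b' nab na'b'; split.
- move=> H; case hab: (Rc tau a b).
  + case ha'b': (Rc tau a' b').
    * have eb := diag_eq hab nab; have eb' := diag_eq ha'b' na'b'.
      subst b b'; have ea := diag Htau nab H; by subst a'.
    * have [e1 e2] := gen Htau (negbT ha'b') (hom_sym H); by split.
  + have := gen Htau (negbT hab) H. by [].
- case=> <- <-.
  have wf : wf_nanoword (w_ab a b) by move=> x; rewrite /= !inE; case: x => [|[|x]].
  apply: hom_iso => //; exists id; split; first by move=> x y _ _.
  by split; [rewrite map_id | ].
Qed.
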